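(* Let $G$ be a finite $p$-group, $k=\mathbb F_p$, and let $L,N$ be normal subgroups of $G$. Then (1) $\mathcal I(L)\mathcal I(N)kG+\mathcal I(N)\mathcal I(L)kG=\mathcal I([L,N])kG+\mathcal I(N)\mathcal I(L)kG$; (2) for every $n\ge1$, $\mathcal J^n(N,G)=\sum_{i=1}^{n}\mathcal I(N)^{n+1-i}\,\mathcal I(\gamma_i^G(N))kG$.
   Context: $\mathcal I(X)$ is the augmentation ideal of $kX$, viewed inside $kG$. The ideals $\mathcal J^n(N,G)$ are defined by $\mathcal J^1(N,G)=\mathcal I(N)\mathcal I(G)$ and $\mathcal J^{n+1}(N,G)=\mathcal I(N)\mathcal J^n(N,G)+\mathcal J^n(N,G)\mathcal I(N)$. The relative lower central series is $\gamma_1^G(N)=G$, $\gamma_{n+1}^G(N)=[\gamma_n^G(N),N]$. *)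

(* Defs.v *)
From mathcomp Require Import all_boot all_order all_algebra all_fingroup all_solvable pgroup commutator.
Set Implicit Arguments. Unset Strict Implicit. Unset Printing Implicit Defensive.
Import GRing.Theory.
Local Open Scope ring_scope.
Local Open Scope group_scope.

(* Group algebra over a coefficient ring k: elements of kgT are finitely
   supported functions gT -> k; kG is the subspace of functions supported
   in G. *)
Section GroupAlgebra.
Variables (gT : finGroupType) (k : nzRingType).

Definition galg := {ffun gT -> k}.

Definition gmul (f g : galg) : galg :=
  [ffun z => (\sum_(x : gT) f x * g (x^-1 * z)%g)%R].

Definition subsp := galg -> Prop.

Definition kspan (X : {set gT}) : subsp :=
  fun f => forall x, x \notin X -> f x = 0%R.

Definition aug (X : {set gT}) : subsp :=
  fun f => kspan X f /\ (\sum_(x : gT) f x = 0)%R.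

Definition prodsp (U V : subsp) : subsp :=
  fun f => exists s : seq (galg * galg),
      (forall uv, uv \in s -> U uv.1 /\ V uv.2) /\
      f = (\sum_(uv <- s) gmul uv.1 uv.2)%R.

Definition addsp (U V : subsp) : subsp :=
  fun f => exists u v, U u /\ V v /\ f = (u + v)%R.

Definition zerosp : subsp := fun f => f = 0%R.

(* U^(m+1) := U * U * ... * U  (m+1 factors) *)
Fixpoint powsp1 (U : subsp) (m : nat) : subsp :=
  match m with 0 => U | m'.+1 => prodsp U (powsp1 U m') end.

(* U^m for m >= 1 (only used with m >= 1) *)
Definition powsp (U : subsp) (m : nat) : subsp := powsp1 U m.-1.

Definition eqsp (U V : subsp) : Prop := forall f, U f <-> V f.

(* J^n(N,G), n >= 1; Jrel m = J^(m+1) *)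
Fixpoint Jrel (N G : {set gT}) (m : nat) : subsp :=
  match m with
  | 0 => prodsp (aug N) (aug G)
  | m'.+1 => addsp (prodsp (aug N) (Jrel N G m')) (prodsp (Jrel N G m') (aug N))
  end.
Definition J (N G : {set gT}) (n : nat) : subsp := Jrel N G n.-1.

End GroupAlgebra.

(* relative lower central series: gammaR G N m = gamma_{m+1}^G(N) *)
Fixpoint gammaR (gT : finGroupType) (G N : {set gT}) (m : nat) : {set gT} :=
  match m with 0 => G | m'.+1 => [~: gammaR G N m', N] end.
Definition gamma (gT : finGroupType) (G N : {set gT}) (i : nat) : {set gT} :=
  gammaR G N i.-1.

Arguments kspan {gT} k X _.
Arguments aug {gT} k X _.
Arguments J {gT} k N G n _.
Arguments zerosp {gT k} _.

(* Main.v *)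
Require Import Defs.
From mathcomp Require Import all_boot all_order all_algebra all_fingroup all_solvable pgroup commutator.
From mathcomp Require Import ring zify.
Set Implicit Arguments. Unset Strict Implicit. Unset Printing Implicit Defensive.
Import GRing.Theory.
Local Open Scope ring_scope.
Section Basic.
Variables (gT : finGroupType) (k : comNzRingType).
Local Notation galg := (galg gT k).
Local Notation gmul := (@gmul gT k).

Lemma zid (A B C D E : galg) : (A - B) - (C - E) = ((D - C) - (B - E)) + (A - D).
Proof. by apply/ffunP => z; rewrite !ffunE; ring. Qed.

Lemma gmulDl f1 f2 g : gmul (f1 + f2) g = gmul f1 g + gmul f2 g.
Proof. by apply/ffunP => z; rewrite !ffunE -big_split; apply: eq_bigr => x _; rewrite ffunE mulrDl. Qed.
Lemma gmulDr f g1 g2 : gmul f (g1 + g2) = gmul f g1 + gmul f g2.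
Proof. by apply/ffunP => z; rewrite !ffunE -big_split; apply: eq_bigr => x _; rewrite ffunE mulrDr. Qed.
Lemma gmul0l g : gmul 0 g = 0.
Proof. by apply/ffunP => z; rewrite !ffunE big1 // => x _; rewrite ffunE mul0r. Qed.
Lemma gmul0r g : gmul g 0 = 0.
Proof. by apply/ffunP => z; rewrite !ffunE big1 // => x _; rewrite ffunE mulr0. Qed.
Lemma gmulNl f g : gmul (- f) g = - gmul f g.
Proof. by apply/eqP; rewrite -subr_eq0 opprK -gmulDl addNr gmul0l. Qed.
Lemma gmulNr f g : gmul f (- g) = - gmul f g.
Proof. by apply/eqP; rewrite -subr_eq0 opprK -gmulDr addNr gmul0r. Qed.
Lemma gmulBl f1 f2 g : gmul (f1 - f2) g = gmul f1 g - gmul f2 g.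
Proof. by rewrite gmulDl gmulNl. Qed.
Lemma gmulBr f g1 g2 : gmul f (g1 - g2) = gmul f g1 - gmul f g2.
Proof. by rewrite gmulDr gmulNr. Qed.
Lemma gmul_suml I (r : seq I) (F : I -> galg) g :
  gmul (\sum_(i <- r) F i) g = \sum_(i <- r) gmul (F i) g.
Proof. elim: r => [|a r IH]; rewrite ?big_nil ?gmul0l // !big_cons gmulDl IH //. Qed.
Lemma gmul_sumr I (r : seq I) (F : I -> galg) g :
  gmul g (\sum_(i <- r) F i) = \sum_(i <- r) gmul g (F i).
Proof. elim: r => [|a r IH]; rewrite ?big_nil ?gmul0r // !big_cons gmulDr IH //. Qed.

Lemma gmulA f g h : gmul (gmul f g) h = gmul f (gmul g h).
Proof.
apply/ffunP => z; rewrite !ffunE.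
under eq_bigr do rewrite ffunE mulr_suml.
rewrite exchange_big /=; apply: eq_bigr => x _.
rewrite ffunE mulr_sumr (reindex_inj (mulgI x)) /=.
by apply: eq_bigr => w _; rewrite mulKg mulrA invMg mulgA.
Qed.

Definition d (a : gT) : galg := [ffun z => (z == a)%:R].
Definition cst (c : k) : galg := [ffun z => if z == 1%g then c else 0].

Lemma gmul_dl a f : gmul (d a) f = [ffun z => f (a^-1 * z)%g].
Proof.
apply/ffunP => z; rewrite !ffunE (bigD1 a) //= big1 ?addr0 => [|x /negbTE xa].
  by rewrite ffunE eqxx mul1r.
by rewrite ffunE xa mul0r.
Qed.
Lemma gmul_dr a f : gmul f (d a) = [ffun z => f (z * a^-1)%g].
Proof.
apply/ffunP => z; rewrite !ffunE (bigD1 (z * a^-1)%g) //= big1 ?addr0 => [|x xa].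
  by rewrite ffunE invMg invgK mulgKV eqxx mulr1.
rewrite ffunE; case: eqP => [e|]; last by rewrite mulr0.
by move: xa; rewrite -e invMg invgK mulKVg eqxx.
Qed.
Lemma dM a b : gmul (d a) (d b) = d (a * b)%g.
Proof.
apply/ffunP => z; rewrite gmul_dl !ffunE.
have -> : ((a^-1 * z)%g == b) = (z == (a * b)%g) by rewrite -(inj_eq (mulgI a)) mulKVg.
by [].
Qed.
Lemma gmul1 f : gmul (d 1%g) f = f.
Proof. by apply/ffunP => z; rewrite gmul_dl ffunE invg1 mul1g. Qed.
Lemma gmulr1 f : gmul f (d 1%g) = f.
Proof. by apply/ffunP => z; rewrite gmul_dr ffunE invg1 mulg1. Qed.
Lemma gmulddA a b f : gmul (d a) (gmul (d b) f) = gmul (d (a * b)%g) f.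
Proof. by rewrite -gmulA dM. Qed.
End Basic.

Section Sp.
Variables (gT : finGroupType) (k : comNzRingType).
Local Notation galg := (galg gT k).
Local Notation gmul := (@gmul gT k).
Local Notation subsp := (subsp gT k).

Definition sub (U V : subsp) := forall f, U f -> V f.
Definition addcl (S : subsp) := S 0 /\ forall a b, S a -> S b -> S (a + b).

Lemma sub_trans (U V W : subsp) : sub U V -> sub V W -> sub U W.
Proof. by move=> h1 h2 f /h1 /h2. Qed.

Lemma prodsp_addcl U V : addcl (prodsp U V).
Proof.
split; first by exists [::]; rewrite big_nil.
move=> a b [s [Hs ->]] [t [Ht ->]]; exists (s ++ t); rewrite big_cat; split=> //.
by move=> uv; rewrite mem_cat => /orP[/Hs|/Ht].
Qed.

Lemma prodsp_in (U V : subsp) u v : U u -> V v -> prodsp U V (gmul u v).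
Proof. by move=> Uu Vv; exists [:: (u, v)]; rewrite big_seq1; split=> // uv; rewrite inE => /eqP ->. Qed.

Lemma prodsp_min (U V W : subsp) : addcl W ->
  (forall u v, U u -> V v -> W (gmul u v)) -> sub (prodsp U V) W.
Proof.
move=> [W0 WD] H f [s [Hs ->]]; elim: s Hs => [|uv s IH] Hs; first by rewrite big_nil.
rewrite big_cons; apply: WD; last by apply: IH => x xs; apply: Hs; rewrite inE xs orbT.
by have [] := Hs uv (mem_head _ _); apply: H.
Qed.

Lemma addsp_addcl A B : addcl A -> addcl B -> addcl (addsp A B).
Proof.
move=> [A0 AD] [B0 BD]; split; first by exists 0, 0; rewrite addr0.
move=> _ _ [a [b [Aa [Bb ->]]]] [a' [b' [Aa' [Bb' ->]]]].
exists (a + a'), (b + b'); do 2?split; [exact: AD|exact: BD|].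
by rewrite addrACA.
Qed.

Lemma addsp_min (A B W : subsp) : addcl W -> sub A W -> sub B W -> sub (addsp A B) W.
Proof. by move=> [_ WD] hA hB _ [a [b [Aa [Bb ->]]]]; apply: WD; [apply: hA|apply: hB]. Qed.

Lemma addsp_inl (A B : subsp) : B 0 -> sub A (addsp A B).
Proof. by move=> B0 f Af; exists f, 0; rewrite addr0. Qed.
Lemma addsp_inr (A B : subsp) : A 0 -> sub B (addsp A B).
Proof. by move=> A0 f Bf; exists 0, f; rewrite add0r. Qed.
Lemma addsp_mono (A B A' B' : subsp) : sub A A' -> sub B B' -> sub (addsp A B) (addsp A' B').
Proof. by move=> h1 h2 _ [a [b [Aa [Bb ->]]]]; exists a, b; split; [apply: h1|split; [apply: h2|]]. Qed.

Lemma prodsp_mono (U V U' V' : subsp) : sub U U' -> sub V V' -> sub (prodsp U V) (prodsp U' V').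
Proof. by move=> h1 h2; apply: prodsp_min; [apply: prodsp_addcl|move=> u v /h1 Uu /h2 Vv; apply: prodsp_in]. Qed.

Lemma prodspA1 (U V W : subsp) : sub (prodsp (prodsp U V) W) (prodsp U (prodsp V W)).
Proof.
apply: prodsp_min; first exact: prodsp_addcl.
move=> a w Ua Ww; pose P := fun a => prodsp U (prodsp V W) (gmul a w).
have [P0 PD] := prodsp_addcl U (prodsp V W).
suff : sub (prodsp U V) P by apply.
apply: prodsp_min => [|u v Uu Vv]; rewrite /P.
  by split=> [|a1 a2 h1 h2]; rewrite ?gmul0l ?gmulDl //; apply: PD.
by rewrite gmulA; apply: prodsp_in => //; apply: prodsp_in.
Qed.

Lemma prodspA2 (U V W : subsp) : sub (prodsp U (prodsp V W)) (prodsp (prodsp U V) W).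
Proof.
apply: prodsp_min; first exact: prodsp_addcl.
move=> u a Uu Wa; pose P := fun a => prodsp (prodsp U V) W (gmul u a).
have [P0 PD] := prodsp_addcl (prodsp U V) W.
suff : sub (prodsp V W) P by apply.
apply: prodsp_min => [|v w Vv Ww]; rewrite /P.
  by split=> [|a1 a2 h1 h2]; rewrite ?gmul0r ?gmulDr //; apply: PD.
by rewrite -gmulA; apply: prodsp_in => //; apply: prodsp_in.
Qed.

Lemma prodsp_addr (U A B : subsp) : sub (prodsp U (addsp A B)) (addsp (prodsp U A) (prodsp U B)).
Proof.
apply: prodsp_min; first by apply: addsp_addcl; apply: prodsp_addcl.
move=> u _ Uu [a [b [Aa [Bb ->]]]]; rewrite gmulDr.
by exists (gmul u a), (gmul u b); split; [apply: prodsp_in|split; [apply: prodsp_in|]].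
Qed.
Lemma prodsp_addl (U A B : subsp) : sub (prodsp (addsp A B) U) (addsp (prodsp A U) (prodsp B U)).
Proof.
apply: prodsp_min; first by apply: addsp_addcl; apply: prodsp_addcl.
move=> _ u [a [b [Aa [Bb ->]]]] Uu; rewrite gmulDl.
by exists (gmul a u), (gmul b u); split; [apply: prodsp_in|split; [apply: prodsp_in|]].
Qed.

Definition bigsp (r : seq nat) (F : nat -> subsp) := \big[@addsp gT k/@zerosp gT k]_(i <- r) F i.

Lemma zerosp_addcl : addcl (@zerosp gT k).
Proof. by split=> // a b -> ->; rewrite addr0. Qed.

Lemma big_addcl r F : (forall i, addcl (F i)) -> addcl (bigsp r F).
Proof.
move=> HF; rewrite /bigsp; elim: r => [|i r IH]; first by rewrite big_nil; exact: zerosp_addcl.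
by rewrite big_cons; apply: addsp_addcl.
Qed.

Lemma big_min r F W : addcl W -> (forall i, i \in r -> sub (F i) W) -> sub (bigsp r F) W.
Proof.
move=> HW; rewrite /bigsp; elim: r => [|i r IH] H; first by rewrite big_nil => f ->; case: HW.
rewrite big_cons; apply: addsp_min => //; first by apply: H; rewrite mem_head.
by apply: IH => j jr; apply: H; rewrite inE jr orbT.
Qed.

Lemma big0 r F : (forall i, F i 0) -> bigsp r F 0.
Proof.
move=> F0; rewrite /bigsp; elim: r => [|i r IH]; first by rewrite big_nil.
by rewrite big_cons; exists 0, 0; rewrite addr0.
Qed.

Lemma big_in r F j : (forall i, F i 0) -> j \in r -> sub (F j) (bigsp r F).
Proof.
move=> F0; rewrite /bigsp; elim: r => [|i r IH] //; rewrite inE big_cons => /orP[/eqP->|jr].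
  by apply: addsp_inl; apply: big0.
by apply: sub_trans (IH jr) _; apply: addsp_inr.
Qed.

Lemma prodsp_bigr (U : subsp) r F : sub (prodsp U (bigsp r F)) (bigsp r (fun i => prodsp U (F i))).
Proof.
apply: prodsp_min; first by apply: big_addcl => i; apply: prodsp_addcl.
move=> u f Uu; rewrite /bigsp; elim: r f => [|i r IH] f; rewrite ?big_nil ?big_cons.
  by move=> ->; rewrite gmul0r.
by move=> [a [b [Fa [Rb ->]]]]; rewrite gmulDr; exists (gmul u a), (gmul u b); split;
  [apply: prodsp_in|split; [apply: IH|]].
Qed.
Lemma prodsp_bigl (U : subsp) r F : sub (prodsp (bigsp r F) U) (bigsp r (fun i => prodsp (F i) U)).
Proof.
apply: prodsp_min; first by apply: big_addcl => i; apply: prodsp_addcl.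
move=> f u + Uu; rewrite /bigsp; elim: r f => [|i r IH] f; rewrite ?big_nil ?big_cons.
  by move=> ->; rewrite gmul0l.
by move=> [a [b [Fa [Rb ->]]]]; rewrite gmulDl; exists (gmul a u), (gmul b u); split;
  [apply: prodsp_in|split; [apply: IH|]].
Qed.
End Sp.

Section GA.
Variables (gT : finGroupType) (k : comNzRingType).
Local Notation galg := (galg gT k).
Local Notation gmul := (@gmul gT k).
Local Notation subsp := (subsp gT k).
Local Notation d := (@d gT k).
Local Notation cst := (@cst gT k).

Lemma kspan_addcl (X : {set gT}) : addcl (kspan k X).
Proof. by split=> [x _|a b ha hb x xX]; rewrite ffunE ?ha ?hb ?addr0. Qed.
Lemma kspanN (X : {set gT}) f : kspan k X f -> kspan k X (- f).
Proof. by move=> h x xX; rewrite ffunE h ?oppr0. Qed.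
Lemma d_kspan (X : {set gT}) g : (g \in X)%g -> kspan k X (d g).
Proof. by move=> gX x xX; rewrite ffunE; case: eqP => // e; by rewrite e gX in xX. Qed.
Lemma cst_kspan (X : {group gT}) c : kspan k X (cst c).
Proof. by move=> x xX; rewrite ffunE; case: eqP => // e; by rewrite e group1 in xX. Qed.

Lemma gmul_cst c t : gmul (cst c) t = [ffun z => c * t z].
Proof.
apply/ffunP => z; rewrite !ffunE (bigD1 1%g) //= big1 ?addr0 => [|x /negbTE x1].
  by rewrite ffunE eqxx invg1 mul1g.
by rewrite ffunE x1 mul0r.
Qed.

Lemma sum_gmul f g : \sum_z gmul f g z = (\sum_z f z) * (\sum_z g z).
Proof.
under eq_bigr do rewrite ffunE.
rewrite exchange_big mulr_suml /=; apply: eq_bigr => x _.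
rewrite -mulr_sumr; congr (_ * _).
by rewrite (reindex_inj (mulgI x)) /=; apply: eq_bigr => w _; rewrite mulKg.
Qed.

Lemma kspanM (X : {group gT}) f g : kspan k X f -> kspan k X g -> kspan k X (gmul f g).
Proof.
move=> hf hg z zX; rewrite ffunE big1 // => x _.
case xX: (x \in X); last by rewrite hf ?xX ?mul0r.
rewrite hg ?mulr0 //; apply: contra zX => h.
by rewrite -(mulKVg x z) groupM.
Qed.

Lemma aug_addcl (X : {set gT}) : addcl (aug k X).
Proof.
split; first by split; [case: (kspan_addcl X)|rewrite big1 // => x _; rewrite ffunE].
move=> a b [ha sa] [hb sb]; split; first by case: (kspan_addcl X) => _; apply.
by under eq_bigr do rewrite ffunE; rewrite big_split /= sa sb addr0.
Qed.

Lemma augM_l (X : {group gT}) h u : kspan k X h -> aug k X u -> aug k X (gmul h u).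
Proof. by move=> hh [hu su]; split; [apply: kspanM|rewrite sum_gmul su mulr0]. Qed.
Lemma augM_r (X : {group gT}) h u : kspan k X h -> aug k X u -> aug k X (gmul u h).
Proof. by move=> hh [hu su]; split; [apply: kspanM|rewrite sum_gmul su mul0r]. Qed.

Lemma dE a z : d a z = (z == a)%:R.
Proof. by rewrite ffunE. Qed.
Lemma sum_d a : \sum_z d a z = 1.
Proof.
rewrite (bigD1 a) //= dE eqxx big1 ?addr0 // => z /negbTE.
by rewrite dE => ->.
Qed.

Lemma d_aug (X : {group gT}) x : (x \in X)%g -> aug k X (d x - d 1%g).
Proof.
move=> xX; split; first by apply: (kspan_addcl X).2; [apply: d_kspan|apply: kspanN; apply: d_kspan].
under eq_bigr do rewrite ffunE [X in _ + X]ffunE; rewrite big_split /= sumrN !sum_d subrr //.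
Qed.

Lemma kdecomp (f : galg) : f = \sum_x gmul (d x) (cst (f x)).
Proof.
apply/ffunP => z; rewrite sum_ffunE.
under eq_bigr do rewrite gmul_dl !ffunE -eq_mulVg1.
rewrite (bigD1 z) //= eqxx big1 ?addr0 // => x /negbTE.
by rewrite eq_sym => ->.
Qed.

Lemma cst0 : cst 0 = 0.
Proof. by apply/ffunP => z; rewrite !ffunE if_same. Qed.

Lemma cst_sum (F : gT -> k) : \sum_x cst (F x) = cst (\sum_x F x).
Proof.
apply/ffunP => z; rewrite sum_ffunE ffunE; case: (eqVneq z 1%g) => [->|z1].
  by apply: eq_bigr => x _; rewrite ffunE eqxx.
by rewrite big1 // => x _; rewrite ffunE (negbTE z1).
Qed.

Lemma aug_decomp (X : {set gT}) u : aug k X u -> u = \sum_x gmul (d x - d 1%g) (cst (u x)).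
Proof.
move=> [_ su].
under eq_bigr do rewrite gmulBl gmul1.
by rewrite sumrB -kdecomp cst_sum su cst0 subr0.
Qed.

Lemma sum_in (W : subsp) (F : gT -> galg) : addcl W -> (forall x, W (F x)) -> W (\sum_x F x).
Proof. by move=> [W0 WD] H; apply: big_ind. Qed.

Lemma aug_exp (X : {set gT}) (W : subsp) u t : addcl W -> aug k X u ->
  (forall x, (x \in X)%g -> forall c, W (gmul (d x - d 1%g) (gmul (cst c) t))) -> W (gmul u t).
Proof.
move=> HW Au H; rewrite (aug_decomp Au) gmul_suml; apply: sum_in => // x.
case xX: (x \in X); first by rewrite gmulA; apply: H.
have ux : u x = 0 by case: Au => Hs _; apply: Hs; rewrite xX.
by rewrite ux cst0 gmul0r gmul0l; case: HW.
Qed.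

Lemma kspan_exp (X : {set gT}) (W : subsp) f t : addcl W -> kspan k X f ->
  (forall x, (x \in X)%g -> forall c, W (gmul (d x) (gmul (cst c) t))) -> W (gmul f t).
Proof.
move=> HW Kf H; rewrite (kdecomp f) gmul_suml; apply: sum_in => // x.
case xX: (x \in X); first by rewrite gmulA; apply: H.
have ux : f x = 0 by apply: Kf; rewrite xX.
by rewrite ux cst0 gmul0r gmul0l; case: HW.
Qed.
End GA.

Section Main.
Variables (gT : finGroupType) (k : comNzRingType) (G : {group gT}).
Local Notation galg := (galg gT k).
Local Notation gmul := (@gmul gT k).
Local Notation subsp := (subsp gT k).
Local Notation d := (@d gT k).
Local Notation cst := (@cst gT k).
Local Notation kG := (kspan k G).

Lemma addcl_mulL a (W : subsp) : addcl W -> addcl (fun t => W (gmul a t)).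
Proof. by move=> [W0 WD]; split; [rewrite gmul0r|move=> u v hu hv; rewrite gmulDr; apply: WD]. Qed.

Lemma cst_rid (Y : {group gT}) c t : prodsp (aug k Y) kG t -> prodsp (aug k Y) kG (gmul (cst c) t).
Proof.
move: t; apply: prodsp_min; first by apply: addcl_mulL; apply: prodsp_addcl.
move=> v h Av Kh; rewrite -gmulA; apply: prodsp_in => //.
by apply: augM_l => //; apply: cst_kspan.
Qed.

Lemma rid_min (X : {set gT}) (W : subsp) : addcl W ->
  (forall x, (x \in X)%g -> forall h, kG h -> W (gmul (d x - d 1%g) h)) ->
  sub (prodsp (aug k X) kG) W.
Proof.
move=> HW H; apply: prodsp_min => // u h Au Kh; apply: aug_exp Au _ => // x xX c.
by apply: H => //; apply: kspanM => //; apply: cst_kspan.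
Qed.

Lemma Q_min (X : {set gT}) (Y : {group gT}) (W : subsp) : addcl W ->
  (forall x y, (x \in X)%g -> (y \in Y)%g -> forall h, kG h ->
     W (gmul (d x - d 1%g) (gmul (d y - d 1%g) h))) ->
  sub (prodsp (aug k X) (prodsp (aug k Y) kG)) W.
Proof.
move=> HW H; apply: (prodsp_min HW) => u t Au Rt; apply: (aug_exp (W:=W) (t:=t) HW Au) => x xX c.
apply: (rid_min (W := fun t => W (gmul (d x - d 1%g) t))) (cst_rid c Rt); first exact: addcl_mulL.
by move=> y yY h Kh; apply: H.
Qed.

Lemma comm_id x y (h : galg) :
  gmul (d x - d 1%g) (gmul (d y - d 1%g) h) =
  gmul (d y - d 1%g) (gmul (d x - d 1%g) h) + gmul (d [~ x^-1, y^-1]%g - d 1%g) (gmul (d (y * x)%g) h).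
Proof.
rewrite !gmulBl !gmulBr !gmul1 !gmulddA.
have -> : ([~ x^-1, y^-1] * (y * x) = x * y)%g.
  by rewrite /commg /conjg !invgK !mulgA !mulgKV.
by rewrite (zid _ _ _ (gmul (d (y * x)%g) h)).
Qed.

Lemma prod_id a b (h : galg) :
  gmul (d (a * b)%g - d 1%g) h = gmul (d a - d 1%g) (gmul (d b) h) + gmul (d b - d 1%g) h.
Proof.
rewrite !gmulBl !gmul1 gmulddA.
by rewrite addrA subrK.
Qed.


Lemma keyA (L M : {group gT}) x y h : (L \subset G)%g -> (M \subset G)%g ->
  (x \in L)%g -> (y \in M)%g -> kG h ->
  addsp (prodsp (aug k M) (prodsp (aug k L) kG)) (prodsp (aug k [~: L, M]%g) kG)
        (gmul (d x - d 1%g) (gmul (d y - d 1%g) h)).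
Proof.
move=> sLG sMG xL yM Kh; rewrite comm_id.
exists (gmul (d y - d 1%g) (gmul (d x - d 1%g) h)), (gmul (d [~ x^-1, y^-1]%g - d 1%g) (gmul (d (y * x)%g) h)).
split; first by apply: prodsp_in; [apply: d_aug|apply: prodsp_in => //; apply: d_aug].
split=> //; apply: prodsp_in; first by apply: d_aug; apply: mem_commg; rewrite groupV.
apply: kspanM => //; apply: d_kspan; rewrite groupM //; [exact: (subsetP sMG)|exact: (subsetP sLG)].
Qed.

Lemma keyB_gen (L M : {group gT}) x y h : (L \subset G)%g -> (M \subset G)%g ->
  (x \in L)%g -> (y \in M)%g -> kG h ->
  addsp (prodsp (aug k L) (prodsp (aug k M) kG)) (prodsp (aug k M) (prodsp (aug k L) kG))
        (gmul (d [~ x, y]%g - d 1%g) h).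
Proof.
move=> sLG sMG xL yM Kh.
set h' := gmul (d ((y^-1 * x^-1)^-1)%g) h.
have Kh' : kG h'.
  apply: kspanM => //; apply: d_kspan; rewrite groupV groupM // groupV; [exact: (subsetP sMG)|exact: (subsetP sLG)].
have := comm_id x^-1 y^-1 h'; rewrite !invgK.
have -> : gmul (d (y^-1 * x^-1)%g) h' = h by rewrite /h' gmulddA mulgV gmul1.
move=> e; have -> : gmul (d [~ x, y]%g - d 1%g) h =
  gmul (d x^-1 - d 1%g) (gmul (d y^-1 - d 1%g) h') +
  gmul (d y^-1 - d 1%g) (gmul (d x^-1 - d 1%g) (- h')).
  by rewrite e !gmulNr addrAC subrr add0r.
exists (gmul (d x^-1 - d 1%g) (gmul (d y^-1 - d 1%g) h')),
  (gmul (d y^-1 - d 1%g) (gmul (d x^-1 - d 1%g) (- h'))).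
split; first by apply: prodsp_in; [apply: d_aug; rewrite groupV|apply: prodsp_in => //; apply: d_aug; rewrite groupV].
split=> //; apply: prodsp_in; first by apply: d_aug; rewrite groupV.
by apply: prodsp_in; [apply: d_aug; rewrite groupV|apply: kspanN].
Qed.

Lemma keyB (L M : {group gT}) c h : (L \subset G)%g -> (M \subset G)%g ->
  (c \in [~: L, M])%g -> kG h ->
  addsp (prodsp (aug k L) (prodsp (aug k M) kG)) (prodsp (aug k M) (prodsp (aug k L) kG))
        (gmul (d c - d 1%g) h).
Proof.
move=> sLG sMG /gen_prodgP [n [cs Hc ->]].
set Z := addsp _ _.
have HZ : addcl Z by apply: addsp_addcl; apply: prodsp_addcl.
elim: n cs Hc h => [|n IH] cs Hc h Kh.
  by rewrite big_ord0 subrr gmul0l; case: HZ.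
rewrite big_ord_recl prod_id; apply: HZ.2; last first.
  by apply: IH => // i; apply: Hc.
have : (\prod_(i < n) cs (lift ord0 i) \in G)%g.
  apply: group_prod => i _; have /imset2P [a b aL bM ->] := Hc (lift ord0 i).
  by apply: groupR; [exact: (subsetP sLG)|exact: (subsetP sMG)].
move=> PG; have /imset2P [a b aL bM ->] := Hc ord0.
apply: keyB_gen => //; apply: kspanM => //; exact: d_kspan.
Qed.

Lemma kgI (N : {group gT}) : (N <| G)%g -> sub (prodsp kG (aug k N)) (prodsp (aug k N) kG).
Proof.
move=> nNG; have HW := prodsp_addcl (aug k N) kG.
apply: (prodsp_min HW) => f u Kf Au.
apply: (kspan_exp (W := prodsp (aug k N) kG) (t := u) HW Kf) => g gG c.
have Au' : aug k N (gmul (cst c) u) by apply: augM_l => //; apply: cst_kspan.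
rewrite -[gmul (cst c) u]gmulr1.
apply: (aug_exp (W := fun v => prodsp (aug k N) kG (gmul (d g) v)) (t := d 1%g)) Au' _.
  exact: addcl_mulL.
move=> n nN c'.
have -> : gmul (d g) (gmul (d n - d 1%g) (gmul (cst c') (d 1%g))) =
   gmul (d (n ^ g^-1)%g - d 1%g) (gmul (d g) (gmul (cst c') (d 1%g))).
  rewrite !gmulBl !gmulBr !gmul1 !gmulddA; congr (_ - _); congr (gmul (d _) _).
  by rewrite /conjg invgK mulgA mulgKV.
apply: prodsp_in.
  apply: d_aug; rewrite memJ_norm // groupV; exact: (subsetP (normal_norm nNG)).
by apply: kspanM; [exact: d_kspan|apply: kspanM; [exact: cst_kspan|exact: d_kspan]].
Qed.

Lemma Igk (N : {group gT}) : (N <| G)%g -> sub (prodsp (aug k N) kG) (prodsp kG (aug k N)).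
Proof.
move=> nNG; have HW := prodsp_addcl kG (aug k N).
apply: (prodsp_min HW) => u f Au Kf.
apply: (aug_exp (W := prodsp kG (aug k N)) (t := f) HW Au) => n nN c.
have Kf' : kG (gmul (cst c) f) by apply: kspanM => //; apply: cst_kspan.
rewrite -[gmul (cst c) f]gmulr1.
apply: (kspan_exp (W := fun v => prodsp kG (aug k N) (gmul (d n - d 1%g) v)) (t := d 1%g)) Kf' _.
  exact: addcl_mulL.
move=> g gG c'.
have -> : gmul (d n - d 1%g) (gmul (d g) (gmul (cst c') (d 1%g))) =
   gmul (d g) (gmul (d (n ^ g)%g - d 1%g) (gmul (cst c') (d 1%g))).
  rewrite !gmulBl !gmulBr !gmul1 !gmulddA; congr (_ - _); congr (gmul (d _) _).
  by rewrite /conjg !mulgA mulgV mul1g.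
apply: prodsp_in; first exact: d_kspan.
apply: augM_r; first by apply: kspanM; [exact: cst_kspan|apply: d_kspan; exact: group1].
apply: d_aug; rewrite memJ_norm //; exact: (subsetP (normal_norm nNG)).
Qed.
End Main.

Section Final.
Variables (gT : finGroupType) (k : comNzRingType) (G : {group gT}).
Local Notation galg := (galg gT k).
Local Notation gmul := (@gmul gT k).
Local Notation subsp := (subsp gT k).
Local Notation d := (@d gT k).
Local Notation kG := (kspan k G).

Lemma part1 (L N : {group gT}) : (L \subset G)%g -> (N \subset G)%g ->
  (eqsp
     (addsp (prodsp (prodsp (aug k L) (aug k N)) (kspan k G))
            (prodsp (prodsp (aug k N) (aug k L)) (kspan k G)))
     (addsp (prodsp (aug k [~: L, N]%g) (kspan k G))
            (prodsp (prodsp (aug k N) (aug k L)) (kspan k G)))).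
Proof.
move=> sLG sNG.
have P0 := (prodsp_addcl (aug k N) (aug k N)).1.
have HR : addcl (addsp (prodsp (aug k [~: L, N]%g) (kspan k G))
            (prodsp (prodsp (aug k N) (aug k L)) (kspan k G))).
  by apply: addsp_addcl; apply: prodsp_addcl.
have HL : addcl (addsp (prodsp (prodsp (aug k L) (aug k N)) (kspan k G))
            (prodsp (prodsp (aug k N) (aug k L)) (kspan k G))).
  by apply: addsp_addcl; apply: prodsp_addcl.
move=> f; split; move: f.
  apply: addsp_min => //; last by apply: addsp_inr; exact: (prodsp_addcl _ _).1.
  apply: sub_trans (@prodspA1 _ _ _ _ _) _.
  apply: sub_trans (Q_min (W := addsp (prodsp (aug k N) (prodsp (aug k L) kG)) (prodsp (aug k [~: L, N]%g) kG)) _ _) _.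
  - by apply: addsp_addcl; apply: prodsp_addcl.
  - by move=> x y xL yN h Kh; apply: keyA.
  apply: addsp_min => //.
    apply: sub_trans (@prodspA2 _ _ _ _ _) _.
    by apply: addsp_inr; exact: (prodsp_addcl _ _).1.
  by apply: addsp_inl; exact: (prodsp_addcl _ _).1.
apply: addsp_min => //; last by apply: addsp_inr; exact: (prodsp_addcl _ _).1.
apply: sub_trans (rid_min (W := addsp (prodsp (aug k L) (prodsp (aug k N) kG)) (prodsp (aug k N) (prodsp (aug k L) kG))) _ _) _.
- by apply: addsp_addcl; apply: prodsp_addcl.
- by move=> c cC h Kh; apply: keyB.
by apply: addsp_mono; apply: prodspA2.
Qed.


Variable N : {group gT}.
Hypothesis nNG : (N <| G)%g.
Let sNG : (N \subset G)%g := normal_sub nNG.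
Local Notation I := (aug k N).

Lemma gamG i : {H : {group gT} | gammaR G N i = H /\ (H \subset G)%g}.
Proof.
elim: i => [|i [H [eH sHG]]]; first by exists G.
exists [~: H, N]%G; split; first by rewrite /= eH.
exact: subset_trans (commgSS sHG sNG) (der1_subG G).
Qed.

Lemma powR m : sub (prodsp (powsp1 I m) I) (powsp1 I m.+1).
Proof.
elim: m => [|m IH] //=.
apply: sub_trans (@prodspA1 _ _ _ _ _) _.
by apply: prodsp_mono => // f; apply: IH.
Qed.

Lemma key2 (A : {group gT}) : (A \subset G)%g ->
  sub (prodsp (prodsp (aug k A) kG) I)
      (addsp (prodsp I (prodsp (aug k A) kG)) (prodsp (aug k [~: A, N]%g) kG)).
Proof.
move=> sAG.
set Z := addsp _ _.
have HZ : addcl Z by apply: addsp_addcl; apply: prodsp_addcl.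
have QZ := Q_min (W := Z) HZ (fun x y xA yN h Kh => keyA sAG sNG xA yN Kh).
apply: (prodsp_min HZ) => g u Rg Iu.
apply: (prodsp_min (W := fun g => Z (gmul g u))) Rg.
  by case: HZ => Z0 ZD; split; [rewrite gmul0l|move=> a b ha hb; rewrite gmulDl; apply: ZD].
move=> a h Aa Kh; rewrite gmulA; apply: QZ; apply: prodsp_in => //.
by apply: kgI => //; apply: prodsp_in.
Qed.

Lemma key3 (A : {group gT}) : (A \subset G)%g ->
  sub (prodsp (aug k [~: A, N]%g) kG)
      (addsp (prodsp (aug k A) (prodsp I kG)) (prodsp I (prodsp (aug k A) kG))).
Proof.
move=> sAG; apply: rid_min; first by apply: addsp_addcl; apply: prodsp_addcl.
by move=> c cC h Kh; apply: keyB.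
Qed.

Definition Gam i := prodsp (aug k (gamma G N i)) kG.
Definition F n i := prodsp (powsp I (n.+1 - i)) (Gam i).
Definition R n := bigsp (index_iota 1 n.+1) (F n).

Lemma FE n i : (1 <= i)%N -> F n i = prodsp (powsp1 I (n - i)) (Gam i).
Proof. by move=> i1; rewrite /F /powsp; congr (prodsp (powsp1 _ _) _); lia. Qed.

Lemma F0 n i : F n i 0.
Proof. exact: (prodsp_addcl _ _).1. Qed.

Lemma R_addcl n : addcl (R n).
Proof. by apply: big_addcl => i; apply: prodsp_addcl. Qed.

Lemma F_in n i : (1 <= i <= n)%N -> sub (F n i) (R n).
Proof. by move=> hi; apply: big_in; [exact: F0|rewrite mem_index_iota ltnS]. Qed.

Lemma GamS i : (1 <= i)%N -> {H : {group gT} | [/\ (H \subset G)%g,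
   Gam i = prodsp (aug k H) kG & Gam i.+1 = prodsp (aug k [~: H, N]%g) kG]}.
Proof.
case: i => // i _; have [H [eH sHG]] := gamG i.
by exists H; split => //; rewrite /Gam /gamma /= eH.
Qed.

Lemma step n : (1 <= n)%N ->
  eqsp (addsp (prodsp I (R n)) (prodsp (R n) I)) (R n.+1).
Proof.
move=> n1 f; split; move: f.
  apply: addsp_min; first exact: R_addcl.
    apply: sub_trans (@prodsp_bigr _ _ _ _ _) _.
    apply: big_min; first exact: R_addcl.
    move=> i; rewrite mem_index_iota => /andP [i1 iln].
    apply: sub_trans (F_in (n := n.+1) (i := i) _); last by rewrite i1 ltnW.
    rewrite FE // (FE n.+1) // subSn //.
    exact: prodspA2.
  apply: sub_trans (@prodsp_bigl _ _ _ _ _) _.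
  apply: big_min; first exact: R_addcl.
  move=> i; rewrite mem_index_iota => /andP [i1 iln].
  rewrite FE //.
  have [H [sHG e1 e2]] := GamS i1.
  apply: sub_trans (@prodspA1 _ _ _ _ _) _.
  apply: sub_trans (prodsp_mono (U' := powsp1 I (n - i)) (fun f h => h) _) _.
    by rewrite e1; apply: key2.
  apply: sub_trans (@prodsp_addr _ _ _ _ _) _.
  apply: addsp_min; first exact: R_addcl.
    apply: sub_trans (@prodspA2 _ _ _ _ _) _.
    apply: sub_trans (prodsp_mono (@powR (n - i)) (fun f h => h)) _.
    rewrite -e1 -subSn // -(FE n.+1) //.
    by apply: F_in; rewrite i1 ltnW.
  have : F n.+1 i.+1 = prodsp (powsp1 I (n - i)) (prodsp (aug k [~: H, N]%g) kG).
    by rewrite FE // e2.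
  move=> <-; apply: F_in; by rewrite /= ltnS.
apply: big_min; first by apply: addsp_addcl; apply: prodsp_addcl.
move=> i; rewrite mem_index_iota => /andP [i1]; rewrite ltnS leq_eqVlt => /orP [/eqP ->|iln].
  have [H [sHG e1 e2]] := GamS n1.
  rewrite /F subSS subSnn /powsp /= e2.
  apply: sub_trans (prodsp_mono (fun f h => h) (key3 sHG)) _.
  apply: sub_trans (@prodsp_addr _ _ _ _ _) _.
  apply: addsp_min; first by apply: addsp_addcl; apply: prodsp_addcl.
    apply: sub_trans (prodsp_mono (fun f h => h) (prodsp_mono (fun f h => h) (Igk nNG))) _.
    apply: sub_trans (prodsp_mono (fun f h => h) (@prodspA2 _ _ _ _ _)) _.
    apply: sub_trans (@prodspA2 _ _ _ _ _) _.
    apply: sub_trans (addsp_inr (A := prodsp I (R n)) (prodsp_addcl _ _).1).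
    apply: (prodsp_mono _ (fun f h => h)).
    apply: (sub_trans _ (F_in (n := n) (i := n) _)); last by rewrite n1 leqnn.
    by rewrite /F subSnn /powsp /= e1.
  apply: sub_trans (addsp_inl (B := prodsp (R n) I) (prodsp_addcl _ _).1).
  apply: (prodsp_mono (fun f h => h)).
  apply: (sub_trans _ (F_in (n := n) (i := n) _)); last by rewrite n1 leqnn.
  by rewrite /F subSnn /powsp /= e1.
apply: sub_trans (addsp_inl (B := prodsp (R n) I) (prodsp_addcl _ _).1).
rewrite (FE n.+1) // subSn //=.
apply: sub_trans (@prodspA1 _ _ _ _ _) _.
apply: (prodsp_mono (fun f h => h)).
apply: (sub_trans _ (F_in (n := n) (i := i) _)); last by rewrite i1.
by rewrite FE.
Qed.

Lemma part2 m : eqsp (@Jrel gT k N G m) (R m.+1).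
Proof.
elim: m => [|m IH].
  rewrite /R /bigsp /index_iota /= big_cons big_nil /F /Gam /powsp /gamma /=.
  move=> f; split; move: f.
    apply: sub_trans (addsp_inl (B := zerosp) (erefl 0)).
    apply: prodsp_mono => // u Au; rewrite -[u]gmulr1; apply: prodsp_in => //.
    by apply: d_kspan; apply: group1.
  apply: addsp_min; first exact: prodsp_addcl.
    apply: prodsp_mono => //; apply: prodsp_min; first exact: aug_addcl.
    by move=> u h Au Kh; apply: augM_r.
  by move=> f ->; exact: (prodsp_addcl _ _).1.
move=> f; rewrite -step //; split.
  by apply: addsp_mono; apply: prodsp_mono => // g /IH.
by apply: addsp_mono; apply: prodsp_mono => // g /IH.
Qed.

End Final.


Theorem mainTheorem8 (p : nat) (gT : finGroupType) (G L N : {group gT}) :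
  prime p -> (p.-group G)%g -> (L <| G)%g -> (N <| G)%g ->
  (eqsp
     (addsp (prodsp (prodsp (aug 'F_p L) (aug 'F_p N)) (kspan 'F_p G))
            (prodsp (prodsp (aug 'F_p N) (aug 'F_p L)) (kspan 'F_p G)))
     (addsp (prodsp (aug 'F_p [~: L, N]%g) (kspan 'F_p G))
            (prodsp (prodsp (aug 'F_p N) (aug 'F_p L)) (kspan 'F_p G))))
  /\
  (forall n : nat, (1 <= n)%N ->
     eqsp (J 'F_p N G n)
          (\big[@addsp gT 'F_p / @zerosp gT 'F_p]_(1 <= i < n.+1)
              prodsp (powsp (aug 'F_p N) (n.+1 - i))
                     (prodsp (aug 'F_p (gamma G N i)) (kspan 'F_p G)))).
Proof.
move=> _ _ nLG nNG; split; first by apply: part1; apply: normal_sub.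
move=> n; case: n => [//|m] _.
exact: (part2 nNG m).
Qed.
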